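(* Consider a cross-modal generalization problem with modalities $m\in\{1,\dots,M\}$ and tasks $n\in\{1,\dots,N\}$, generalization objective $\mathcal{L}[f_w]=\mathbb{E}_{(m,n)\sim p(m,n),\,(x,y)\sim p_{m,n}(x,y)}\log\left[\frac{f_w(x,y,m,n)}{p(x,y\mid m,n)}\right]$, and a low-resource subset $\mathcal{M}$ of modality–task pairs on which only estimates $q(x,y\mid m,n)\neq p(x,y\mid m,n)$ are available, and assume the minimum visibility assumption holds. Suppose all modalities are pairwise strongly aligned. Then one can define a surrogate loss functional $\tilde{\mathcal{L}}[f_w]$, computable from the known distributions, such that $\mathcal{L}\left[\arg\max_w \tilde{\mathcal{L}}[f_w]\right]=0$, i.e. maximizing the surrogate yields perfect generalization (including on the low-resource pairs in $\mathcal{M}$).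
   Context: There are $M$ heterogeneous input spaces (modalities) $\mathcal{X}_m$ and $N$ label spaces (tasks) $\mathcal{Y}_n$. A meta-distribution over modalities, tasks, inputs and labels is given; $(m,n)$ is drawn from a prior $p(m,n)$ and, within the classification problem $\mathcal{T}(m,n)=(\mathcal{X}_m,\mathcal{Y}_n,p_{m,n})$, data are drawn from the true labeling distribution $p_{m,n}(x,y):=p(x,y\mid m,n)$. A model is a single function $f_w(x,y,m,n)$ with parameters $w$; the cross-modal generalization problem is to maximize $\mathcal{L}[f_w]$ above, whose maximum value $0$ is attained when $f_w(x,y,m,n)=p(x,y\mid m,n)$ (''perfect generalization''). A distribution is called known if it can be estimated exactly/accurately. The problem is (partially) low resource on a subset $\mathcal{M}$ of modality–task pairs if for $(m,n)\in\mathcal{M}$, $p(x,y\mid m,n)$ is not known and only an estimate $q(x,y\mid m,n)\ne p(x,y\mid m,n)$ is available. Minimum visibility assumption: for every task $n$ there is at least one modality $m$ such that $p(x,y\mid m,n)$ is known; for every modality $m$ there is at least one task $n$ such that $p(x,y\mid m,n)$ is known; and all single-variable marginals $p(x)$, $p(y)$ are known. Strong alignment: for modalities $m_i\ne m_j$ with joint $p(x_i,x_j)$ known ($x_i\in\mathcal{X}_{m_i}$, $x_j\in\mathcal{X}_{m_j}$), there is strong alignment between $m_i$ and $m_j$ if both $p(x_i\mid x_j)$ and $p(x_j\mid x_i)$ are delta distributions (a one-to-one mapping between $x_i$ and $x_j$); otherwise only weak alignment. *)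

(* Defs.v *)
From HB Require Import structures.
From mathcomp Require Import all_boot all_order all_algebra.
From mathcomp Require Import reals constructive_ereal exp.

Set Implicit Arguments.
Unset Strict Implicit.
Unset Printing Implicit Defensive.

Import Order.TTheory GRing.Theory Num.Theory.
Local Open Scope ring_scope.

Section CrossModal.
Variable R : realType.
Variables (M N : nat) (X : 'I_M -> finType) (Y : 'I_N -> finType).

(* The meta-distribution is a distribution P over worlds; every distribution
   of the paper (p(x,y|m,n), p(x), p(y), p(x_i,x_j)) is a marginal of P. *)
Definition world := ({dffun forall m : 'I_M, X m} * {dffun forall n : 'I_N, Y n})%type.

Definition cond_table := forall (m : 'I_M) (n : 'I_N), X m -> Y n -> R.

Definition is_distr (T : finType) (P : T -> R) :=
  (forall t, 0 <= P t) /\ \sum_(t : T) P t = 1.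

Definition labeling (P : world -> R) : cond_table :=
  fun m n x y => \sum_(w : world | (w.1 m == x) && (w.2 n == y)) P w.
Definition marg_x (P : world -> R) (m : 'I_M) (x : X m) : R :=
  \sum_(w : world | w.1 m == x) P w.
Definition marg_y (P : world -> R) (n : 'I_N) (y : Y n) : R :=
  \sum_(w : world | w.2 n == y) P w.
Definition joint_xx (P : world -> R) (i j : 'I_M) (xi : X i) (xj : X j) : R :=
  \sum_(w : world | (w.1 i == xi) && (w.1 j == xj)) P w.

Definition valid_model (f : cond_table) :=
  forall m n, (forall x y, 0 <= f m n x y) /\ \sum_(x : X m) \sum_(y : Y n) f m n x y = 1.

Definition gen_objective (prior : 'I_M -> 'I_N -> R) (p f : cond_table) : \bar R :=
  (\sum_(m < M) \sum_(n < N) \sum_(x : X m) \sum_(y : Y n)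
     (if (0 < prior m n * p m n x y)%R then
        (if (0 < f m n x y)%R then
           ((prior m n * p m n x y) * ln (f m n x y / p m n x y))%R%:E
         else -oo)
      else 0))%E.

(* Everything that is "known": which pairs are low resource, the labeling
   distributions on the non-low-resource pairs (and the estimates q on the
   low-resource ones), the single-variable marginals and the pairwise joints
   of modalities. *)
Record observation := Obs {
  obs_lowres : 'I_M -> 'I_N -> bool;
  obs_table : cond_table;
  obs_marg_x : forall m : 'I_M, X m -> R;
  obs_marg_y : forall n : 'I_N, Y n -> R;
  obs_joint_xx : forall i j : 'I_M, X i -> X j -> R }.

Definition observe (lowres : 'I_M -> 'I_N -> bool) (P : world -> R) (q : cond_table)
  : observation :=
  Obs lowres (fun m n => if lowres m n then q m n else @labeling P m n)
      (@marg_x P) (@marg_y P) (@joint_xx P).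

Definition low_resource (lowres : 'I_M -> 'I_N -> bool) (P : world -> R) (q : cond_table) :=
  forall m n, lowres m n -> q m n <> @labeling P m n.

(* minimum visibility (the marginals are known by construction of observe) *)
Definition min_visibility (lowres : 'I_M -> 'I_N -> bool) :=
  (forall n, exists m, ~~ lowres m n) /\ (forall m, exists n, ~~ lowres m n).

Definition delta_cond (A B : finType) (J : A -> B -> R) (ma : A -> R) :=
  forall a, 0 < ma a -> exists b0, forall b, J a b / ma a = (b == b0)%:R.

Definition strongly_aligned (P : world -> R) (i j : 'I_M) :=
  delta_cond (@joint_xx P i j) (@marg_x P i) /\
  delta_cond (fun xj xi => @joint_xx P i j xi xj) (@marg_x P j).

End CrossModal.

(* Main.v *)
Require Import Defs.
From HB Require Import structures.
From mathcomp Require Import all_boot all_order all_algebra.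
From mathcomp Require Import reals constructive_ereal exp.
From Stdlib Require Import ClassicalEpsilon.
Import Order.TTheory GRing.Theory Num.Theory.
Local Open Scope ring_scope.

Lemma key (R : realType) (M N : nat) (X : 'I_M -> finType) (Y : 'I_N -> finType)
  (P : world X Y -> R) (m m' : 'I_M) (n : 'I_N) :
  (forall w, 0 <= P w) -> strongly_aligned P m m' ->
  forall (x : X m) (y : Y n), \sum_(b : X m') (joint_xx P x b / marg_x P x) * @labeling _ _ _ _ _ P _ n b y
              = @labeling _ _ _ _ _ P _ n x y.
Proof.
move=> P0 [d1 d2] x y.
have mge0 : 0 <= marg_x P x by apply: sumr_ge0.
have [m0|mpos] := eqVneq (marg_x P x) 0.
  rewrite big1; last by move=> b _; rewrite m0 invr0 mulr0 mul0r.
  apply/esym/eqP; rewrite eq_le sumr_ge0 // andbT -m0 /labeling /marg_x.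
  rewrite [X in _ <= X](bigID (fun w : world X Y => w.2 n == y)) /=.
  by rewrite -[leLHS]addr0 lerD2l sumr_ge0.
have mgt0 : 0 < marg_x P x by rewrite lt_def mpos.
have [b0 Hb0] := d1 x mgt0.
have -> : \sum_(b : X m') (joint_xx P x b / marg_x P x) * @labeling _ _ _ _ _ P _ n b y
          = @labeling _ _ _ _ _ P _ n b0 y.
  rewrite (eq_bigr (fun b => if b == b0 then @labeling _ _ _ _ _ P _ n b y else 0)); last first.
    by move=> b _; rewrite Hb0; case: eqP => _; rewrite ?mul1r ?mul0r.
  by rewrite -big_mkcond big_pred1_eq.
have jx : joint_xx P x b0 = marg_x P x.
  have := Hb0 b0; rewrite eqxx => /(congr1 (fun t => t * marg_x P x)).
  by rewrite mul1r mulfVK.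
have m'gt0 : 0 < marg_x P b0.
  apply: (lt_le_trans mgt0); rewrite -jx /joint_xx /marg_x.
  rewrite [X in _ <= X](bigID (fun w : world X Y => w.1 m == x)) /=.
  have -> : \sum_(w : world X Y | (w.1 m' == b0) && (w.1 m == x)) P w = \sum_(w : world X Y | (w.1 m == x) && (w.1 m' == b0)) P w.
    by apply: eq_bigl => w; rewrite andbC.
  by rewrite -[leLHS]addr0 lerD2l sumr_ge0.
have [a0 Ha0] := d2 b0 m'gt0.
have jx' : joint_xx P x b0 = marg_x P b0.
  have := Ha0 x; have [->|ne] := eqVneq x a0.
    move=> /(congr1 (fun t => t * marg_x P b0)).
    by rewrite mul1r mulfVK // gt_eqF.
  move=> /eqP; rewrite mulf_eq0 invr_eq0 (gt_eqF m'gt0) orbF jx.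
  by rewrite (negbTE mpos).
have Z1 : forall w : world X Y, (w.1 m == x) && (w.1 m' != b0) -> P w = 0.
  apply: psumr_eq0P; first by move=> w _; exact: P0.
  have := jx; rewrite /joint_xx /marg_x.
  rewrite [X in _ = X](bigID (fun w : world X Y => w.1 m' == b0)) /=.
  by move/eqP; rewrite -[X in X == _]addr0 => /eqP/addrI/esym.
have Z2 : forall w : world X Y, (w.1 m' == b0) && (w.1 m != x) -> P w = 0.
  apply: psumr_eq0P; first by move=> w _; exact: P0.
  have := jx'; rewrite /joint_xx /marg_x.
  rewrite [X in _ = X](bigID (fun w : world X Y => w.1 m == x)) /=.
  have -> : \sum_(w : world X Y | (w.1 m == x) && (w.1 m' == b0)) P w = \sum_(w : world X Y | (w.1 m' == b0) && (w.1 m == x)) P w.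
    by apply: eq_bigl => w; rewrite andbC.
  by move/eqP; rewrite -[X in X == _]addr0 => /eqP/addrI/esym.
rewrite /labeling big_mkcond [RHS]big_mkcond; apply: eq_bigr => w _.
case A: (w.1 m == x); case B: (w.1 m' == b0); case C: (w.2 n == y) => //=.
- by rewrite Z1 // A B.
- by rewrite Z2 // A B.
Qed.

Lemma lab_valid (R : realType) (M N : nat) (X : 'I_M -> finType) (Y : 'I_N -> finType)
  (P : world X Y -> R) : is_distr P -> valid_model (labeling P).
Proof.
move=> [P0 P1] m n; split.
  by move=> x y; apply: sumr_ge0 => w _; exact: P0.
rewrite -P1 (partition_big (fun w : world X Y => w.1 m) predT) //=.
apply: eq_bigr => x _.
rewrite (partition_big (fun w : world X Y => w.2 n) predT) //=.
Qed.

Definition recon (R : realType) (M N : nat) (X : 'I_M -> finType) (Y : 'I_N -> finType)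
  (o : observation R X Y) : cond_table R X Y :=
  fun m n => if ~~ obs_lowres o m n then obs_table o (m:=m) (n:=n) else
   match [pick m' | ~~ obs_lowres o m' n] with
   | Some m' => fun x y => \sum_(b : X m')
        (obs_joint_xx o (i:=m) (j:=m') x b / obs_marg_x o (m:=m) x) * obs_table o (m:=m') (n:=n) b y
   | None => obs_table o (m:=m) (n:=n) end.

Arguments recon {R M N X Y} o.

Definition surr (R : realType) (M N : nat) (X : 'I_M -> finType) (Y : 'I_N -> finType)
  (o : observation R X Y) (f : cond_table R X Y) : \bar R :=
  if excluded_middle_informative (forall m n x y, f m n x y = recon o m n x y)
  then 0%E else (-oo)%E.

Theorem proposition1 (R : realType) :
  exists S : forall (M N : nat) (X : 'I_M -> finType) (Y : 'I_N -> finType),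
               observation R X Y -> cond_table R X Y -> \bar R,
  forall (M N : nat) (X : 'I_M -> finType) (Y : 'I_N -> finType)
         (prior : 'I_M -> 'I_N -> R) (P : world X Y -> R)
         (lowres : 'I_M -> 'I_N -> bool) (q : cond_table R X Y),
    is_distr (fun mn : 'I_M * 'I_N => prior mn.1 mn.2) ->
    is_distr P ->
    low_resource lowres P q ->
    min_visibility lowres ->
    (forall i j : 'I_M, i != j -> strongly_aligned P i j) ->
    let Lt := S M N X Y (observe lowres P q) in
    (exists f, valid_model f /\ forall g, valid_model g -> (Lt g <= Lt f)%E) /\
    (forall f, valid_model f -> (forall g, valid_model g -> (Lt g <= Lt f)%E) ->
       gen_objective prior (labeling P) f = 0%E).
Proof.
exists (@surr R) => M N X Y prior P lowres q [pr0 pr1] HP _ [vis _] Hal Lt.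
have Hrec : forall m n x y, recon (observe lowres P q) m n x y = labeling P x y.
  move=> m n x y; rewrite /recon /=.
  case L: (lowres m n) => //=.
  case: pickP => [m' /= Hm'|H]; last by have [m' Hm'] := vis n; move: (H m') => /=; rewrite Hm'.
  rewrite (negbTE Hm').
  apply: key; first by case: HP.
  apply: Hal; apply/eqP => E; move: Hm'; rewrite -E L.
  by [].
have LtE : forall f, Lt f = 0%E <-> (forall m n x y, f m n x y = labeling P x y).
  move=> f; rewrite /Lt /surr; case: excluded_middle_informative => H; split => //.
  - by move=> _ m n x y; rewrite H Hrec.
  - by move=> H'; exfalso; apply: H => m n x y; rewrite H' Hrec.
have Ltle : forall g, (Lt g <= 0)%E.
  by move=> g; rewrite /Lt /surr; case: excluded_middle_informative => H //; rewrite leNye.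
split.
  exists (labeling P); split; first exact: lab_valid.
  by move=> g _; have [_ ->] := LtE (labeling P) => //; apply: Ltle.
move=> f vf fmax.
have Lf : Lt f = 0%E.
  apply/eqP; rewrite eq_le Ltle /=.
  by have [_ <-] := LtE (labeling P) => //; apply: fmax; apply: lab_valid.
have Hf := (proj1 (LtE f) Lf).
rewrite /gen_objective big1 // => m _; rewrite big1 // => n _.
rewrite big1 // => x _; rewrite big1 // => y _.
rewrite Hf.
have p0 : 0 <= labeling P x y by apply: sumr_ge0 => w _; case: HP => HP0 _; exact: HP0.
case h: (0 < labeling P x y).
  by rewrite divff ?gt_eqF // ln1 mulr0; case: ifP.
have -> : labeling P x y = 0 by apply/eqP; rewrite eq_le p0 andbT leNgt h.
by rewrite mulr0 ltxx.
Qed.
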